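(* Let $G$ be a finite group. Then the non-inverse graph $\Gamma_{NI}(G)$ is minimally edge connected if and only if either every non-identity element of $G$ is self-inverse, or no non-identity element of $G$ is self-inverse.
   Context: The non-inverse graph $\Gamma_{NI}(G)$ of a group $G$ is the simple undirected graph with vertex set $G$ in which two distinct elements $x,y$ are adjacent if and only if $y\neq x^{-1}$. An element $x$ is self-inverse if $x=x^{-1}$. For a connected graph $\Gamma$, an edge cut-set is a set $S$ of edges such that $\Gamma-S$ is disconnected or has just one vertex, and the edge connectivity $\kappa'(\Gamma)$ is the smallest size of an edge cut-set. $\Gamma$ is minimally edge connected if $\kappa'(\Gamma-\epsilon)=\kappa'(\Gamma)-1$ for every edge $\epsilon$ of $\Gamma$. *)

(* Defs.v *)
From HB Require Import structures.
From mathcomp Require Import all_boot all_fingroup.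
Set Implicit Arguments. Unset Strict Implicit. Unset Printing Implicit Defensive.

(* A simple undirected graph on the vertex set V (a finType) is given by its
   edge set E : {set {set V}}, each edge being a 2-element set {x, y}. *)

Definition adj (V : finType) (E : {set {set V}}) : rel V :=
  fun u v => [set u; v] \in E.

Definition connectedb (V : finType) (E : {set {set V}}) : bool :=
  [forall x : V, forall y : V, connect (adj E) x y].

Definition edge_cutset (V : finType) (E S : {set {set V}}) : bool :=
  (S \subset E) && (~~ connectedb (E :\: S) || (#|V| == 1)).

(* edge connectivity: smallest size of an edge cut-set
   (E itself is a cut-set whenever V is nonempty) *)
Definition edge_connectivity (V : finType) (E : {set {set V}}) : nat :=
  \big[minn/#|E|]_(S : {set {set V}} | edge_cutset E S) #|S|.

Definition min_edge_connected (V : finType) (E : {set {set V}}) : Prop :=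
  connectedb E /\
  forall e, e \in E -> edge_connectivity (E :\ e) = (edge_connectivity E).-1.

Definition NI_edges (gT : finGroupType) : {set {set gT}} :=
  [set [set x; y] | x in [set: gT], y in [set: gT] & (x != y) && (y != x^-1)%g].

(* Main.v *)
Require Import Defs.
From HB Require Import structures.
From mathcomp Require Import all_boot all_fingroup zify.
Set Implicit Arguments. Unset Strict Implicit.

Lemma arith1 a b c q: 0<a -> 0<b -> q <= a -> q <= b -> a*b <= c + q -> a + b - 2 <= c.
Proof. move=> a0 b0 qa qb h.
have: (a-1)*(b-1) + 1 >= q by case: (leqP a b) => ab; nia.
nia. Qed.

Section Gen.
Variable T : finType.
Implicit Types (E S : {set {set T}}) (A : {set T}).

Definition NIgen (s : T -> T) : {set {set T}} :=
  [set [set x; y] | x in [set: T], y in [set: T] & (x != y) && (y != s x)].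

Definition crossing (E : {set {set T}}) (A : {set T}) :=
  [set f in E | [exists u in A, exists v in ~: A, f == [set u; v]]].

Lemma cut_cross E S : 1 < #|T| -> edge_cutset E S ->
  exists A : {set T}, [/\ A != set0, A != setT & crossing E A \subset S].
Proof.
move=> n2 /andP[sSE /orP[nc | /eqP n1]]; last by rewrite n1 in n2.
have [x [y nxy]] : exists x y, ~~ connect (adj (E :\: S)) x y.
  move: nc; rewrite /connectedb negb_forall => /existsP[x].
  rewrite negb_forall => /existsP[y] h; by exists x, y.
exists [set z | connect (adj (E :\: S)) x z]; split.
- by apply/set0Pn; exists x; rewrite inE connect0.
- apply/negP => /eqP h. have: y \in [set z | connect (adj (E :\: S)) x z] by rewrite h inE.
  by rewrite inE (negbTE nxy).
- apply/subsetP => f; rewrite inE => /andP[fE /existsP[u /andP[uA /existsP[v /andP[vA /eqP fe]]]]].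
  apply/negPn/negP => fS. move: vA; rewrite !inE => /negP; apply.
  rewrite inE in uA; apply: connect_trans uA (connect1 _).
  by rewrite /adj inE -fe fS fE.
Qed.

Lemma ec_lb E k : 1 < #|T| ->
  (forall A : {set T}, A != set0 -> A != setT -> k <= #|crossing E A|) ->
  k <= edge_connectivity E.
Proof.
move=> n2 H. rewrite /edge_connectivity.
apply: (big_ind (fun m => k <= m)).
- move: n2; rewrite -cardsT => /card_gt1P[x [y [_ _ xy]]].
  apply: leq_trans (H [set x] _ _) _.
  + by apply/set0Pn; exists x; rewrite inE.
  + apply/negP => /eqP h. have: y \in [set x] by rewrite h inE.
    by rewrite inE eq_sym (negbTE xy).
  + by apply: subset_leq_card; apply/subsetP => f; rewrite inE => /andP[].
- by move=> m1 m2; rewrite leq_min => -> ->.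
- move=> S /(cut_cross n2)[A [A0 AT sub]].
  exact: leq_trans (H A A0 AT) (subset_leq_card sub).
Qed.

Lemma bigmin_le (X : eqType) (s : seq X) (P : pred X) (F : X -> nat) x0 a :
  a \in s -> P a -> \big[minn/x0]_(i <- s | P i) F i <= F a.
Proof.
move=> + Pa; elim: s => // b s IH; rewrite inE big_cons => /orP[/eqP<-|/IH h].
  by rewrite Pa geq_minl.
by case: (P b) => //; rewrite geq_min h orbT.
Qed.

Lemma ec_ub E S : edge_cutset E S -> edge_connectivity E <= #|S|.
Proof.
move=> cS; apply: bigmin_le => //; exact: mem_index_enum.
Qed.

Lemma vertex_cut E v : 1 < #|T| -> edge_cutset E [set f in E | v \in f].
Proof.
move=> n2; apply/andP; split.
  by apply/subsetP => f; rewrite inE => /andP[].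
apply/orP; left. move: n2; rewrite -cardsT => /card_gt1P[x [y [_ _ xy]]].
have [w wv] : exists w, w != v.
  by case: (eqVneq x v) => [<-|xv]; [exists y; rewrite eq_sym | exists x].
apply/negP => /forallP/(_ v)/forallP/(_ w)/connectP[p].
case: p => [_ /= /eqP| z p /= /andP[vz _] _]; first by rewrite (negbTE wv).
move: vz; rewrite /adj !inE.
by rewrite eqxx /= andbT => /andP[/negP].
Qed.

Lemma deg_ub E v (W : {set T}) : 1 < #|T| ->
  (forall f, f \in E -> v \in f -> exists2 w, w \in W & f = [set v; w]) ->
  edge_connectivity E <= #|W|.
Proof.
move=> n2 H; apply: leq_trans (ec_ub (vertex_cut E v n2)) _.
apply: leq_trans (leq_imset_card (fun w => [set v; w]) W).
apply: subset_leq_card; apply/subsetP => f; rewrite inE => /andP[fE vf].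
by have [w wW ->] := H f fE vf; apply: imset_f.
Qed.

Lemma NIgen_mem s u v : u != v -> v != s u -> [set u; v] \in NIgen s.
Proof. by move=> uv vu; apply/imset2P; exists u v; rewrite ?inE ?uv ?vu. Qed.

Lemma NIgenP s (sK : involutive s) f v : f \in NIgen s -> v \in f ->
  exists w, [/\ w != v, w != s v & f = [set v; w]].
Proof.
case/imset2P => x y _; rewrite inE => /andP[_ /andP[xy yx]] -> .
rewrite in_set2 => /orP[/eqP-> | /eqP->].
  by exists y; rewrite eq_sym.
exists x; split => //; last by rewrite setUC.
apply/eqP => h; move/eqP: yx; apply; by rewrite h sK.
Qed.

Lemma cross_cnt s (sK : involutive s) A :
  #|A| * #|~:A| <= #|crossing (NIgen s) A| + #|[set p in setX A (~:A) | p.2 == s p.1]|.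
Proof.
set Q := [set p in _ | _].
rewrite -cardsX -(cardsID Q (setX A (~:A))) addnC leq_add //; last first.
  by apply: subset_leq_card; apply: subsetIr.
rewrite -(@card_in_imset _ _ (fun p => [set p.1; p.2])).
  apply: subset_leq_card; apply/subsetP => f /imsetP[[u v]].
  rewrite !inE /= => /andP[nQ /andP[uA vA]] ->.
  have uv : u != v by apply/eqP => e; move: vA; rewrite -e uA.
  rewrite NIgen_mem //; last by move: nQ; rewrite uA vA.
  by apply/existsP; exists u; rewrite uA; apply/existsP; exists v; rewrite inE vA /=.
move=> [u1 v1] [u2 v2]; rewrite !inE /= => /andP[_ /andP[u1A v1A]] /andP[_ /andP[u2A v2A]] e.
have h1 : u1 \in [set u2; v2] by rewrite -e set21.
have h2 : v1 \in [set u2; v2] by rewrite -e set22.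
move: h1 h2; rewrite !in_set2 => /orP[/eqP e1|/eqP e1] /orP[/eqP e2|/eqP e2].
- by move: v1A; rewrite e2 u2A.
- by rewrite e1 e2.
- by move: v2A; rewrite -e1 u1A.
- by move: v2A; rewrite -e1 u1A.
Qed.

Lemma Q_le_A s A : #|[set p in setX A (~:A) | p.2 == s p.1]| <= #|A|.
Proof.
rewrite -(@card_in_imset _ _ (fun p => p.1)).
  by apply: subset_leq_card; apply/subsetP => u /imsetP[p]; rewrite !inE => /andP[/andP[]] + _ _ ->.
move=> [u1 v1] [u2 v2]; rewrite !inE /= => /andP[_ /eqP->] /andP[_ /eqP->] -> //.
Qed.

Lemma Q_le_C s (sK : involutive s) A : #|[set p in setX A (~:A) | p.2 == s p.1]| <= #|~:A|.
Proof.
rewrite -(@card_in_imset _ _ (fun p => p.2)).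
  by apply: subset_leq_card; apply/subsetP => u /imsetP[p]; rewrite !inE => /andP[/andP[]] _ + _ ->.
move=> [u1 v1] [u2 v2]; rewrite !inE /= => /andP[_ /eqP->] /andP[_ /eqP->] /= e.
by rewrite (inv_inj sK e).
Qed.

Lemma Q_id s A : (forall x, s x = x) -> #|[set p in setX A (~:A) | p.2 == s p.1]| = 0.
Proof.
move=> sid; apply/eqP; rewrite cards_eq0; apply/eqP/setP => -[u v]; rewrite !inE /= sid.
by apply/negP => /andP[/andP[uA vA] /eqP e]; move: vA; rewrite e uA.
Qed.

Lemma cross_del E e A : #|crossing E A| <= #|crossing (E :\ e) A| + 1.
Proof.
rewrite (cardsD1 e (crossing E A)) addnC leq_add ?leq_b1 //.
apply: subset_leq_card; apply/subsetP => f; rewrite !inE => /andP[fe /andP[fE ->]].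
by rewrite fe fE.
Qed.

Lemma sizeA A : A != set0 -> A != setT -> [/\ 0 < #|A|, 0 < #|~:A| & #|A| + #|~:A| = #|T|].
Proof.
move=> A0 AT; rewrite cardsC card_gt0 A0; split => //.
rewrite card_gt0; apply/negP => /eqP h; move/negP: AT; apply.
by rewrite -(setCK A) h setC0.
Qed.


Lemma NIgen_lb s (sK : involutive s) : 1 < #|T| -> #|T| - 2 <= edge_connectivity (NIgen s).
Proof.
move=> n2; apply: ec_lb => // A A0 AT; have [a0 b0 <-] := sizeA A0 AT.
exact: arith1 a0 b0 (Q_le_A s A) (Q_le_C sK A) (cross_cnt sK A).
Qed.

Lemma NIgen_lb_del s (sK : involutive s) e : 1 < #|T| -> #|T| - 3 <= edge_connectivity (NIgen s :\ e).
Proof.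
move=> n2; apply: ec_lb => // A A0 AT; have [a0 b0 <-] := sizeA A0 AT.
have := arith1 a0 b0 (Q_le_A s A) (Q_le_C sK A) (cross_cnt sK A).
have := cross_del (NIgen s) e A. lia.
Qed.

Lemma conn_of_lb E : 0 < edge_connectivity E -> connectedb E.
Proof.
move=> h; apply/negPn/negP => nc.
have : edge_connectivity E <= #|(set0 : {set {set T}})|.
  by apply: ec_ub; rewrite /edge_cutset sub0set setD0 nc.
by rewrite cards0 leqn0 => /eqP e; rewrite e in h.
Qed.

Lemma small_eq : #|T| <= 1 -> forall x y : T, x = y.
Proof.
move=> n1 x y; apply/eqP; apply/negPn/negP => xy.
have : 1 < #|[set: T]| by apply/card_gt1P; exists x, y.
by rewrite cardsT ltnNge n1.
Qed.

End Gen.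

Lemma arith2 a b : 0 < a -> 0 < b -> a + b - 1 <= a * b.
Proof. nia. Qed.

Lemma arith3 a b : 0 < a -> 0 < b -> a + b - 2 + 1 <= a * b.
Proof. nia. Qed.

Lemma arith4 p q n : 1 < n -> n - 1 <= q -> q <= n.-1 -> n - 2 <= p -> p <= n.-1 - 1 -> p = q.-1.
Proof. lia. Qed.

Lemma arith5 p q n : 0 < n.-1 - 1 -> n - 2 <= q -> q <= n.-1 - 1 -> n - 3 <= p -> p <= n.-1 - 1 - 1 -> p = q.-1.
Proof. lia. Qed.

Lemma arith6 q n : 1 < n -> n - 1 <= q -> 0 < q.
Proof. lia. Qed.

Lemma arith7 q n : 0 < n.-1 - 1 -> n - 2 <= q -> 0 < q.
Proof. lia. Qed.

Section G.
Variable gT : finGroupType.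
Local Open Scope group_scope.

Lemma NI_eq : NI_edges gT = NIgen (@invg gT).
Proof. by []. Qed.

Lemma invK : involutive (@invg gT).
Proof. exact: invgK. Qed.

Lemma cardW2 (t : gT) : t^-1 != t -> #|[set~ t] :\ t^-1| = #|gT|.-1 - 1.
Proof.
move=> tt; have := cardsD1 t^-1 [set~ t]; rewrite cardsC1 !inE tt => ->; by rewrite add1n subn1.
Qed.

Lemma ub_nonsi (t : gT) : 1 < #|gT| -> t^-1 != t ->
  edge_connectivity (NI_edges gT) <= #|gT|.-1 - 1.
Proof.
move=> n2 tt; rewrite -(cardW2 tt); apply: (@deg_ub _ _ t) => // f.
rewrite NI_eq => fE tf; have [w [wt wt' ->]] := NIgenP invK fE tf.
by exists w; rewrite // !inE wt wt'.
Qed.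

Lemma one_in_W (t : gT) : t != 1 -> 1 \in [set~ t] :\ t^-1.
Proof.
move=> t1; rewrite !inE eq_sym (eq_sym 1 t) t1 andbT.
by rewrite eq_invg1.
Qed.


Definition sig (u x : gT) := if x == 1 then u else if x == u then 1 else x^-1.

Lemma sigK (u : gT) : u != 1 -> u^-1 = u -> involutive (sig u).
Proof.
move=> u1 uu x; rewrite /sig.
case: (eqVneq x 1) => [->|x1]; first by rewrite (negbTE u1) eqxx.
case: (eqVneq x u) => [->|xu]; first by rewrite eqxx.
have -> : (x^-1 == 1) = false by rewrite eq_invg1 (negbTE x1).
have -> : (x^-1 == u) = false by apply/negbTE; apply: contra xu => /eqP h; rewrite -uu -h invgK.
by rewrite invgK.
Qed.

Lemma NI_minus (u : gT) : u != 1 -> u^-1 = u ->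
  NI_edges gT :\ [set 1; u] = NIgen (sig u).
Proof.
move=> u1 uu; apply/setP => f; apply/idP/idP.
- rewrite inE => /andP[fe /imset2P[x y _]]; rewrite inE => /andP[_ /andP[xy yx]] fE.
  rewrite fE in fe *; apply: NIgen_mem => //; rewrite /sig.
  case: (eqVneq x 1) => [x1|x1].
    by apply/eqP => yu; move: fe; rewrite x1 yu set11.
  case: (eqVneq x u) => [xu|xu] //.
  by apply/eqP => yu; move: fe; rewrite xu yu setUC set11.
- case/imset2P => x y _; rewrite inE => /andP[_ /andP[xy yx]] ->.
  rewrite inE; apply/andP; split; last first.
    rewrite NI_eq; apply: NIgen_mem => //; move: yx; rewrite /sig.
    case: (eqVneq x 1) => [x1|x1]; first by move=> _; rewrite x1 invg1 eq_sym -x1.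
    case: (eqVneq x u) => [xu|xu] //; by move=> _; rewrite xu uu eq_sym -xu.
  apply/negP => /set1P e.
    have hx : x \in [set 1; u] by rewrite -e set21.
    have hy : y \in [set 1; u] by rewrite -e set22.
    move: hx hy yx xy; rewrite !in_set2 /sig.
    case/orP => /eqP->; case/orP => /eqP->; rewrite ?eqxx ?(negbTE u1) //.
    all: try by move/negP => h; exfalso; apply: h; apply/eqP.
Qed.


Lemma lbE : 1 < #|gT| -> #|gT| - 2 <= edge_connectivity (NI_edges gT).
Proof. move=> n2; exact: NIgen_lb invK n2. Qed.

Lemma lbD e : 1 < #|gT| -> #|gT| - 3 <= edge_connectivity (NI_edges gT :\ e).
Proof. move=> n2; exact: NIgen_lb_del invK e n2. Qed.

Lemma lbA : (forall x : gT, x^-1 = x) -> 1 < #|gT| -> #|gT| - 1 <= edge_connectivity (NI_edges gT).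
Proof.
move=> hid n2; rewrite NI_eq; apply: ec_lb => // A A0 AT; have [a0 b0 <-] := sizeA A0 AT.
have h1 := cross_cnt invK A; rewrite Q_id // addn0 in h1.
apply: leq_trans h1; exact: arith2.
Qed.

Lemma lbAD e : (forall x : gT, x^-1 = x) -> 1 < #|gT| -> #|gT| - 2 <= edge_connectivity (NI_edges gT :\ e).
Proof.
move=> hid n2; rewrite NI_eq; apply: ec_lb => // A A0 AT; have [a0 b0 <-] := sizeA A0 AT.
have h1 := cross_cnt invK A; rewrite Q_id // addn0 in h1.
have h2 := cross_del (NIgen invg) e A.
rewrite -(leq_add2r 1); apply: leq_trans h2; apply: leq_trans h1; exact: arith3.
Qed.

Lemma ubA : 1 < #|gT| -> edge_connectivity (NI_edges gT) <= #|gT|.-1.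
Proof.
move=> n2; rewrite -(cardsC1 (1 : gT)); apply: (@deg_ub _ _ 1) => // f.
rewrite NI_eq => fE tf; have [w [wt wt' ->]] := NIgenP invK fE tf.
by exists w; rewrite // !inE wt.
Qed.

Lemma ubAD (x y : gT) e : 1 < #|gT| -> x != y -> e = [set x; y] ->
  edge_connectivity (NI_edges gT :\ e) <= #|gT|.-1 - 1.
Proof.
move=> n2 xy ->.
have cW : #|[set~ x] :\ y| = #|gT|.-1 - 1.
  have := cardsD1 y [set~ x]; rewrite cardsC1 !inE eq_sym xy => ->; by rewrite add1n subn1.
rewrite -cW; apply: (@deg_ub _ _ x) => // f.
rewrite inE NI_eq => /andP[fe fE] tf; have [w [wt wt' fw]] := NIgenP invK fE tf.
exists w; rewrite // !inE wt andbT.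
by apply/eqP => wy; move: fe; rewrite fw wy set11.
Qed.

Lemma ubBD (v w0 : gT) e : 1 < #|gT| -> v^-1 != v -> w0 != v -> w0 != v^-1 ->
  e = [set v; w0] ->
  edge_connectivity (NI_edges gT :\ e) <= #|gT|.-1 - 1 - 1.
Proof.
move=> n2 vv wv wv' ->.
have cW : #|[set~ v] :\ v^-1 :\ w0| = #|gT|.-1 - 1 - 1.
  rewrite -(cardW2 vv).
  have := cardsD1 w0 ([set~ v] :\ v^-1); rewrite !inE wv wv' => ->; by rewrite add1n subn1.
rewrite -cW; apply: (@deg_ub _ _ v) => // f.
rewrite inE NI_eq => /andP[fe fE] tf; have [w [wt wt' fw]] := NIgenP invK fE tf.
exists w => //; rewrite !inE wt wt' /=. rewrite andbT.
by apply/eqP => wy; move: fe; rewrite fw wy set11.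
Qed.

End G.

Unset Implicit Arguments.
Theorem mainTheorem6 (gT : finGroupType) :
  min_edge_connected (NI_edges gT) <->
  (forall x : gT, x != 1%g -> (x^-1)%g = x) \/
  (forall x : gT, x != 1%g -> (x^-1)%g != x).
Proof.
have iK := @invK gT.
case: (leqP #|gT| 1) => [n1 | n2].
  have eq := small_eq n1.
  split=> _; first by left => x; rewrite (eq x 1%g).
  split.
    by apply/forallP => x; apply/forallP => y; rewrite (eq x y) connect0.
  move=> e; rewrite NI_eq => /imset2P[x y _]; rewrite inE (eq x y) eqxx.
  by case/andP.
split.
- move=> [conn H].
  case: (boolP [forall x : gT, (x != 1%g) ==> ((x^-1)%g == x)]) => [/forallP h|].
    by left => x /(implyP (h x))/eqP.
  move/forallPn=> [t]; rewrite negb_imply => /andP[t1 tt].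
  case: (boolP [forall x : gT, (x != 1%g) ==> ((x^-1)%g != x)]) => [/forallP h|].
    by right => x /(implyP (h x)).
  move/forallPn=> [u]; rewrite negb_imply negbK => /andP[u1 /eqP uu].
  have eE : [set 1%g; u] \in NI_edges gT.
    by rewrite NI_eq; apply: NIgen_mem; [rewrite eq_sym | rewrite invg1].
  have := H _ eE.
  have ub := ub_nonsi n2 tt.
  have lb : #|gT| - 2 <= edge_connectivity (NI_edges gT :\ [set 1%g; u]).
    by rewrite (NI_minus u1 uu); exact: NIgen_lb (sigK u1 uu) n2.
  have W1 : 0 < #|gT|.-1 - 1.
    rewrite -(cardW2 tt) card_gt0; apply/set0Pn; exists 1%g; exact: one_in_W.
  move=> h; rewrite h in lb; exfalso; lia.
- case => [hA | hB].
    have hid : forall x : gT, (x^-1)%g = x.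
      by move=> x; case: (eqVneq x 1%g) => [->|/hA] //; rewrite invg1.
    have lb := lbA hid n2; have ub := ubA n2.
    split.
      apply: conn_of_lb; exact: arith6 n2 lb.
    move=> e; rewrite {1}NI_eq => /imset2P[x y _]; rewrite inE => /andP[_ /andP[xy _]] he.
    have l2 := lbAD e hid n2; have u2 := ubAD n2 xy he.
    exact: arith4 n2 lb ub l2 u2.
  have [x0 x01] : exists x : gT, x != 1%g.
    move: n2; rewrite -cardsT => /card_gt1P[a [b [_ _ ab]]].
    by case: (eqVneq a 1%g) => [a1|a1]; [exists b; rewrite -a1 eq_sym | exists a].
  have ub := ub_nonsi n2 (hB _ x01); have lb := lbE n2.
  have W1 : 0 < #|gT|.-1 - 1.
    rewrite -(cardW2 (hB _ x01)) card_gt0; apply/set0Pn; exists 1%g; exact: one_in_W.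
  split.
    apply: conn_of_lb; exact: arith7 W1 lb.
  move=> e; rewrite {1}NI_eq => /imset2P[x y _]; rewrite inE => /andP[_ /andP[xy yx]] he.
  have [v [w0 [v1 wv wv' he2]]] : exists v w0,
      [/\ v != 1%g, w0 != v, w0 != (v^-1)%g & [set x; y] = [set v; w0]].
    case: (eqVneq x 1%g) => [x1 | x1]; last by exists x, y; split; rewrite // eq_sym.
    exists y, x; split; [by rewrite -x1 eq_sym | by [] | | by rewrite setUC].
    by rewrite x1 eq_sym eq_invg1 eq_sym -x1.
  have u2 := ubBD n2 (hB _ v1) wv wv' (etrans he he2); have l2 := lbD e n2.
  exact: arith5 W1 lb ub l2 u2.
Qed.
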